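(* Let $x_1,\dots,x_N\in[0,1]$ with $\mu^\star:=\frac1N\sum_{i=1}^N x_i$, and let $X_1,\dots,X_N$ be a sequential random sample without replacement from $\{x_1,\dots,x_N\}$ (at each step a ballot is drawn uniformly at random from those remaining). For $\mu\in[0,1]$ and $i\in\{1,\dots,N\}$ let \[ \mathcal C_i(\mu) := \frac{N\mu - \sum_{j=1}^{i-1}X_j}{N-i+1}. \] Let $D\ge 2$ be an integer and let $(\theta_1^+,\dots,\theta_D^+)$ and $(\theta_1^-,\dots,\theta_D^-)$ be nonnegative vectors each summing to one. Define \[ M_t^{D+}(\mu) := \sum_{d=1}^D\theta_d^+\prod_{i=1}^t\Big(1+\frac{d}{(D+1)\mathcal C_i(\mu)}(X_i-\mathcal C_i(\mu))\Big), \] \[ M_t^{D-}(\mu) := \sum_{d=1}^D\theta_d^-\prod_{i=1}^t\Big(1-\frac{d}{(D+1)(1-\mathcal C_i(\mu))}(X_i-\mathcal C_i(\mu))\Big), \] and, for $\beta\in[0,1]$, $M_t^{D\pm}(\mu) := \beta M_t^{D+}(\mu)+(1-\beta)M_t^{D-}(\mu)$, with $M_0^{D\pm}(\mu):=1$. Then $(M_t^{D\pm}(\mu^\star))_{t=0}^N$ is a nonnegative martingale starting at one (with respect to the filtration generated by $X_1,\dots,X_t$). Consequently, for $\alpha\in(0,1)$, the sets \[ C_t^{\pm} := \{\mu\in[0,1] : M_t^{D\pm}(\mu)<1/\alpha\},\quad t=1,\dots,N, \] form a $(1-\alpha)$ confidence sequence for $\mu^\star$, i.e. $\mathbb P(\exists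 t\in\{1,\dots,N\} : \mu^\star\notin C_t^\pm)\le\alpha$.
   Context: $\mathcal C_i(\mu)$ is the conditional mean of $X_i$ given $X_1,\dots,X_{i-1}$ if the population mean were $\mu$. *)

(* Defs.v *)
From HB Require Import structures.
From mathcomp Require Import all_boot all_order all_algebra all_fingroup.
Set Implicit Arguments. Unset Strict Implicit. Unset Printing Implicit Defensive.
Import Order.TTheory GRing.Theory Num.Theory.
Local Open Scope ring_scope.

(* Sampling without replacement: the draw order is a uniformly random
   permutation sigma of 'I_N; the i-th draw (1-based, 1 <= i <= N) is
   X_i = x (sigma (i-1)).  Out of range indices give 0 (never used). *)
Definition draw (R : ringType) (N : nat) (x : 'I_N -> R) (s : 'S_N) (i : nat) : R :=
  nth 0 [seq x (s k) | k <- enum 'I_N] i.-1.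

Definition Cmean (R : fieldType) (N : nat) (x : 'I_N -> R) (s : 'S_N)
    (mu : R) (i : nat) : R :=
  (N%:R * mu - \sum_(1 <= j < i) draw x s j) / (N%:R - i%:R + 1).

(* M_t^{D+}(mu); theta is indexed by 'I_D, entry d : 'I_D standing for d.+1 *)
Definition Mplus (R : fieldType) (N D : nat) (x : 'I_N -> R) (theta : 'I_D -> R)
    (t : nat) (mu : R) (s : 'S_N) : R :=
  \sum_(d < D) theta d * \prod_(1 <= i < t.+1)
     (1 + (d.+1)%:R / ((D.+1)%:R * Cmean x s mu i) * (draw x s i - Cmean x s mu i)).

Definition Mminus (R : fieldType) (N D : nat) (x : 'I_N -> R) (theta : 'I_D -> R)
    (t : nat) (mu : R) (s : 'S_N) : R :=
  \sum_(d < D) theta d * \prod_(1 <= i < t.+1)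
     (1 - (d.+1)%:R / ((D.+1)%:R * (1 - Cmean x s mu i)) * (draw x s i - Cmean x s mu i)).

Definition Mpm (R : fieldType) (N D : nat) (x : 'I_N -> R)
    (thp thm : 'I_D -> R) (beta : R) (t : nat) (mu : R) (s : 'S_N) : R :=
  if t == 0%N then 1
  else beta * Mplus x thp t mu s + (1 - beta) * Mminus x thm t mu s.

Definition same_prefix (R : eqType) (N : nat) (X : 'S_N -> nat -> R)
    (t : nat) (s u : 'S_N) : bool :=
  all (fun j => X s j == X u j) (iota 1 t).

Definition cond_exp (R : fieldType) (N : nat) (X : 'S_N -> nat -> R)
    (t : nat) (Y : 'S_N -> R) (s : 'S_N) : R :=
  (\sum_(u | same_prefix X t s u) Y u) / #|[set u | same_prefix X t s u]|%:R.

Definition is_martingale (R : fieldType) (N : nat) (X : 'S_N -> nat -> R)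
    (M : nat -> 'S_N -> R) : Prop :=
  (forall t, (t <= N)%N -> forall s u, same_prefix X t s u -> M t s = M t u) /\
  (forall t, (t < N)%N -> forall s, cond_exp X t (M t.+1) s = M t s).

Definition unif_prob (R : fieldType) (N : nat) (E : {set 'S_N}) : R :=
  #|E|%:R / #|[set: 'S_N]|%:R.

(* Main.v *)
Require Import Defs.
From HB Require Import structures.
From mathcomp Require Import all_boot all_order all_algebra all_fingroup.
From mathcomp Require Import zify ring lra.
Import Order.TTheory GRing.Theory Num.Theory.
Local Open Scope ring_scope.
Set Implicit Arguments. Unset Strict Implicit. Unset Printing Implicit Defensive.

Section CE.
Variables (R : realFieldType) (N : nat) (X : 'S_N -> nat -> R).

Lemma sp_refl t s : same_prefix X t s s.
Proof. by apply/allP => j _. Qed.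

Lemma sp_sym t s u : same_prefix X t s u -> same_prefix X t u s.
Proof. by move/allP => H; apply/allP => j /H; rewrite eq_sym. Qed.

Lemma sp_trans t s u v : same_prefix X t s u -> same_prefix X t u v ->
  same_prefix X t s v.
Proof.
move/allP => H1 /allP H2; apply/allP => j Hj.
by rewrite (eqP (H1 j Hj)) (eqP (H2 j Hj)).
Qed.

Lemma sp_le t k s u : (k <= t)%N -> same_prefix X t s u -> same_prefix X k s u.
Proof.
move=> Hk /allP H; apply/allP => j Hj; apply: H.
by move: Hj; rewrite !mem_iota; lia.
Qed.

Definition cnt t s : R := #|[set u | same_prefix X t s u]|%:R.

Lemma cnt_gt0 t s : 0 < cnt t s.
Proof.
rewrite /cnt ltr0n; apply/card_gt0P; exists s; by rewrite inE sp_refl.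
Qed.

Lemma cnt_eq t s u : same_prefix X t s u -> cnt t s = cnt t u.
Proof.
move=> H; rewrite /cnt; congr (_%:R); apply: eq_card => v; rewrite !inE.
apply/idP/idP => Hv; first exact: sp_trans (sp_sym H) Hv.
exact: sp_trans H Hv.
Qed.

Lemma sum_sp t s (F : 'S_N -> R) :
  \sum_(u | same_prefix X t s u) F u = \sum_(u in [set u | same_prefix X t s u]) F u.
Proof. by apply: eq_bigl => u; rewrite inE. Qed.

Lemma ce_lin t s Y Z a b :
  (forall u, same_prefix X t s u -> Y u = a + b * Z u) ->
  cond_exp X t Y s = a + b * cond_exp X t Z s.
Proof.
move=> H; rewrite /cond_exp.
rewrite (eq_bigr (fun u => a + b * Z u)) // big_split /= -mulr_sumr.
have c0 : cnt t s != 0 by rewrite gt_eqF // cnt_gt0.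
rewrite sum_sp sumr_const -/(cnt t s) mulrDl mulrA.
congr (_ + _); rewrite -mulr_natr -[cnt t s]/(#|[set u | same_prefix X t s u]|%:R).
by rewrite mulfK.
Qed.

Lemma ce_sum t s (I : finType) (F : I -> 'S_N -> R) :
  cond_exp X t (fun u => \sum_i F i u) s = \sum_i cond_exp X t (F i) s.
Proof.
rewrite /cond_exp exchange_big /= mulr_suml //.
Qed.

Lemma tower t (g Y : 'S_N -> R) :
  (forall s u, same_prefix X t s u -> g s = g u) ->
  \sum_s g s * cond_exp X t Y s = \sum_s g s * Y s.
Proof.
move=> Hg; rewrite /cond_exp.
transitivity (\sum_s \sum_(u | same_prefix X t s u) g u * Y u / cnt t u).
  apply: eq_bigr => s _; rewrite mulr_suml mulr_sumr; apply: eq_bigr => u Hu.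
  by rewrite (Hg _ _ Hu) -/(cnt t s) (cnt_eq Hu) mulrA.
rewrite (exchange_big_dep predT) //=; apply: eq_bigr => u _.
rewrite -mulr_suml sumr_const.
have -> : #|[pred i | same_prefix X t i u]| = #|[set v | same_prefix X t u v]|.
  apply: eq_card => v; rewrite !inE /=; apply/idP/idP; exact: sp_sym.
rewrite -mulr_natr -/(cnt t u) mulrAC divfK // gt_eqF // cnt_gt0.
by [].
Qed.

End CE.

Section Ville.
Variables (R : realFieldType) (N : nat) (X : 'S_N -> nat -> R)
  (M : nat -> 'S_N -> R) (a : R).
Hypotheses (Hmart : is_martingale X M) (Hnn : forall t s, (t <= N)%N -> 0 <= M t s)
  (H0 : forall s, M 0%N s = 1) (Ha : 0 < a).

Definition gg t s := all (fun k => M k s < a) (iota 1 t).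
Definition SS T s := M 0%N s + \sum_(t < T) (gg t s)%:R * (M t.+1 s - M t s).

Lemma gg_inv t s u : (t <= N)%N -> same_prefix X t s u -> gg t s = gg t u.
Proof.
move=> tN H; apply: eq_in_all => k; rewrite mem_iota => /andP [k1 k2].
rewrite (Hmart.1 k _ s u) //; first lia.
apply: sp_le H; lia.
Qed.

Lemma SS_claim T s : (T <= N)%N ->
  (gg T s -> SS T s = M T s) /\ (~~ gg T s -> a <= SS T s).
Proof.
elim: T => [|T IH] TN.
  by split => //; rewrite /SS big_ord0 addr0.
have [IH1 IH2] := IH (ltnW TN).
have gS : gg T.+1 s = gg T s && (M T.+1 s < a).
  rewrite /gg -[T.+1]addn1 iotaD all_cat /= andbT add1n.
  by rewrite addn1.
have SS1 : SS T.+1 s = SS T s + (gg T s)%:R * (M T.+1 s - M T s).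
  by rewrite /SS big_ord_recr /= addrA.
rewrite gS SS1; case: (boolP (gg T s)) => g /=.
  rewrite (IH1 g) mul1r addrC subrK; split => //; by rewrite leNgt.
by rewrite mul0r addr0; split => // _; exact: IH2.
Qed.

Lemma SS_ge0 s : 0 <= SS N s.
Proof.
have [H1 H2] := SS_claim s (leqnn N).
case: (boolP (gg N s)) => g; first by rewrite H1 // Hnn.
by apply: le_trans (ltW Ha) (H2 g).
Qed.

Lemma SS_sum : \sum_s SS N s = #|[set: 'S_N]|%:R.
Proof.
rewrite /SS big_split /= (eq_bigr (fun _ => 1)) // sumr_const cardsT.
rewrite exchange_big /= big1 ?addr0 // => t _.
transitivity (\sum_s (gg t s)%:R * cond_exp X t (M t.+1) s - \sum_s (gg t s)%:R * M t s).
  rewrite (tower (g := fun s => (gg t s)%:R)).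
    by rewrite -sumrB; apply: eq_bigr => s _; rewrite mulrBr.
  by move=> s u H; rewrite (gg_inv (ltnW (ltn_ord t)) H).
apply/eqP; rewrite subr_eq0; apply/eqP; apply: eq_bigr => s _.
by rewrite (Hmart.2 t (ltn_ord t)).
Qed.

Lemma ville :
  #|[set s : 'S_N | [exists t : 'I_N, ~~ (M t.+1 s < a)]]|%:R * a <= #|[set: 'S_N]|%:R.
Proof.
set E := [set s | _].
rewrite mulr_natl -sumr_const -SS_sum.
apply: le_trans (_ : \sum_(s in E) SS N s <= _).
  apply: ler_sum => s; rewrite inE => /existsP [t Ht].
  have [_ H2] := SS_claim s (leqnn N); apply: H2.
  apply/negP => /allP /(_ t.+1); rewrite mem_iota => H.
  rewrite H in Ht => //.
  by rewrite /= add1n ltnS ltn_ord.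
rewrite [leRHS](bigID (fun s => s \in E)) /= lerDl.
by apply: sumr_ge0 => s _; exact: SS_ge0.
Qed.
End Ville.

Section Draw.
Variables (R : realFieldType) (N : nat) (x : 'I_N -> R).
Hypothesis (Hx : forall i, 0 <= x i <= 1).

Lemma drawE' s (k : 'I_N) : draw x s k.+1 = x (s k).
Proof.
by rewrite /draw /= (nth_map k) ?size_enum_ord // nth_ord_enum.
Qed.

Lemma drawE s k (Hk : (k < N)%N) : draw x s k.+1 = x (s (Ordinal Hk)).
Proof. exact: (drawE' s (Ordinal Hk)). Qed.

Lemma draw_01 s j : 0 <= draw x s j <= 1.
Proof.
rewrite /draw; case: (ltnP j.-1 (size [seq x (s k) | k <- enum 'I_N])) => H.
  by move: (mem_nth 0 H) => /mapP [k _ ->]; exact: Hx.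
by rewrite nth_default // lexx ler01.
Qed.

Lemma sp_draw t s u j : same_prefix (draw x) t s u -> (1 <= j <= t)%N ->
  draw x s j = draw x u j.
Proof.
move/allP => H Hj; apply/eqP; apply: H; rewrite mem_iota; lia.
Qed.

Definition pref s t := \sum_(1 <= j < t.+1) draw x s j.

Lemma sp_pre t s u i : same_prefix (draw x) t s u -> (i <= t)%N -> pref s i = pref u i.
Proof.
move=> H it; apply: eq_big_nat => j Hj; apply: sp_draw H _; lia.
Qed.

Lemma sp_cmean t s u i mu : same_prefix (draw x) t s u -> (i <= t.+1)%N ->
  Cmean x s mu i = Cmean x u mu i.
Proof.
move=> H it; rewrite /Cmean; congr ((_ - _) / _).
apply: eq_big_nat => j Hj; apply: sp_draw H _; lia.
Qed.

Lemma total_draw s : \sum_(0 <= k < N) draw x s k.+1 = \sum_i x i.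
Proof.
rewrite big_mkord (eq_bigr (fun k => x (s k))) => [|k _]; last exact: drawE'.
by rewrite [RHS](reindex_inj (@perm_inj _ s)).
Qed.

Lemma rem_eq s t : (t <= N)%N ->
  \sum_i x i - pref s t = \sum_(t <= k < N) draw x s k.+1.
Proof.
move=> tN; rewrite -(total_draw s) (big_cat_nat (leq0n t) tN) /= /pref big_add1 /=.
by rewrite addrAC subrr add0r.
Qed.

Lemma den_eq t : (t < N)%N -> N%:R - (t.+1)%:R + 1 = (N - t)%:R :> R.
Proof.
move=> tN; rewrite natrB ?(ltnW tN) // -addn1 natrD; ring.
Qed.

Definition mustar := (\sum_(i < N) x i) / N%:R.

Lemma Nmu : (0 < N)%N -> N%:R * mustar = \sum_i x i.
Proof.
by move=> N0; rewrite /mustar mulrC divfK // pnatr_eq0 -lt0n.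
Qed.

Lemma mustar01 : 0 <= mustar <= 1.
Proof.
rewrite /mustar; case: (posnP N) => [N0|N0].
  have -> : N%:R = 0 :> R by rewrite N0.
  by rewrite invr0 mulr0 lexx ler01.
have Np : 0 < N%:R :> R by rewrite ltr0n.
rewrite divr_ge0 ?sumr_ge0 ?ler0n //=; last by move=> i _; case/andP: (Hx i).
rewrite ler_pdivrMr // mul1r.
have -> : N%:R = \sum_(i < N) (1 : R) by rewrite sumr_const card_ord.
by apply: ler_sum => i _; case/andP: (Hx i).
Qed.

Lemma Cmean_eq s t : (t < N)%N ->
  Cmean x s mustar t.+1 = (\sum_(t <= k < N) draw x s k.+1) / (N - t)%:R.
Proof.
move=> tN; rewrite /Cmean den_eq // Nmu; last lia.
by rewrite -rem_eq ?(ltnW tN).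
Qed.

Lemma Cmean01 s i : (1 <= i <= N)%N -> 0 <= Cmean x s mustar i <= 1.
Proof.
case: i => [//|t] /= tN.
have Np : 0 < (N - t)%:R :> R by rewrite ltr0n subn_gt0.
rewrite Cmean_eq // divr_ge0 ?ler0n ?sumr_ge0 //=; last by move=> k _; case/andP: (draw_01 s k.+1).
rewrite ler_pdivrMr // mul1r.
have -> : (N - t)%:R = \sum_(t <= k < N) (1 : R) by rewrite sumr_const_nat.
by apply: ler_sum => k _; case/andP: (draw_01 s k.+1).
Qed.

End Draw.

Section Key.
Variables (R : realFieldType) (N : nat) (x : 'I_N -> R).

Lemma swap_sum t k s (tN : (t < N)%N) (kN : (k < N)%N) : (t <= k)%N ->
  \sum_(u | same_prefix (draw x) t s u) draw x u k.+1 =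
  \sum_(u | same_prefix (draw x) t s u) draw x u t.+1.
Proof.
move=> tk; set a := Ordinal tN; set b := Ordinal kN.
rewrite (reindex_inj (mulgI (tperm a b))).
apply: eq_big => u.
  apply: eq_in_all => j; rewrite mem_iota => Hj.
  case: j Hj => [//|j] Hj.
  have jN : (j < N)%N by lia.
  rewrite !(drawE _ _ jN) permM tpermD //; apply/eqP => /(congr1 val) /=; lia.
move=> _; rewrite (drawE _ _ kN) (drawE _ _ tN) permM -/b tpermR.
by [].
Qed.

Lemma ce_draw t s : (t < N)%N ->
  cond_exp (draw x) t (fun u => draw x u t.+1) s = Cmean x s (mustar x) t.+1.
Proof.
move=> tN.
set P := fun u => same_prefix (draw x) t s u.
set S := \sum_(u | P u) draw x u t.+1.
have H2 : \sum_(u | P u) \sum_(t <= k < N) draw x u k.+1 = (N - t)%:R * S.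
  rewrite exchange_big /= (eq_big_nat _ _ (F2 := fun _ => S)); last first.
    by move=> k Hk; apply: swap_sum; lia.
  by rewrite sumr_const_nat mulr_natl.
have H3 : \sum_(u | P u) \sum_(t <= k < N) draw x u k.+1 =
    cnt (draw x) t s * (\sum_i x i - pref x s t).
  rewrite (eq_bigr (fun _ => \sum_i x i - pref x s t)); last first.
    move=> u Pu; rewrite -rem_eq ?(ltnW tN) //; congr (_ - _).
    by apply/esym/sp_pre; first exact: Pu.
  by rewrite sum_sp sumr_const mulr_natl.
rewrite Cmean_eq // -rem_eq ?(ltnW tN) // /cond_exp -/S -/(cnt _ _ _).
have c0 : cnt (draw x) t s != 0 by rewrite gt_eqF // cnt_gt0.
have n0 : (N - t)%:R != 0 :> R by rewrite pnatr_eq0 -lt0n subn_gt0.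
have -> : S = cnt (draw x) t s * (\sum_i x i - pref x s t) / (N - t)%:R.
  by rewrite -H3 H2 mulrC mulKf.

by rewrite mulrAC [cnt _ _ _ * _]mulrC mulfK.
Qed.

End Key.

Section Gen.
Variables (R : realFieldType) (N D : nat) (X : 'S_N -> nat -> R).

Lemma ce_add2 t s Y1 Y2 b1 b2 :
  cond_exp X t (fun u => b1 * Y1 u + b2 * Y2 u) s =
  b1 * cond_exp X t Y1 s + b2 * cond_exp X t Y2 s.
Proof.
by rewrite /cond_exp big_split /= -!mulr_sumr mulrDl !mulrA.
Qed.

Definition Mgen (th : 'I_D -> R) (F : 'I_D -> nat -> 'S_N -> R) t u :=
  \sum_(d < D) th d * \prod_(1 <= i < t.+1) F d i u.

Lemma Mgen_inv th F t s u :
  (forall d i, (1 <= i <= t)%N -> F d i u = F d i s) -> Mgen th F t u = Mgen th F t s.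
Proof.
move=> H; apply: eq_bigr => d _; congr (_ * _); apply: eq_big_nat => i Hi.
apply: H; lia.
Qed.

Lemma Mgen_ce th F t s :
  (forall d i u, (1 <= i <= t)%N -> same_prefix X t s u -> F d i u = F d i s) ->
  (forall d, cond_exp X t (F d t.+1) s = 1) ->
  cond_exp X t (Mgen th F t.+1) s = Mgen th F t s.
Proof.
move=> Hi Hc; rewrite /Mgen ce_sum; apply: eq_bigr => d _.
rewrite (ce_lin (a := 0) (b := th d * \prod_(1 <= i < t.+1) F d i s) (Z := F d t.+1)).
  by rewrite Hc add0r mulr1.
move=> u Hu; rewrite add0r big_nat_recr //= mulrA; congr (_ * _ * _).
apply: eq_big_nat => i Hi'; apply: Hi => //; lia.
Qed.

Lemma Mgen_ge0 th F t u : (forall d, 0 <= th d) ->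
  (forall d i, (1 <= i <= t)%N -> 0 <= F d i u) -> 0 <= Mgen th F t u.
Proof.
move=> H1 H2; apply: sumr_ge0 => d _; apply: mulr_ge0 => //.
rewrite big_nat_cond; apply: prodr_ge0 => i /andP [Hi _]; apply: H2; lia.
Qed.

End Gen.

Section Fac.
Variables (R : realFieldType) (N D : nat) (x : 'I_N -> R).
Hypothesis (Hx : forall i, 0 <= x i <= 1).

Definition Fplus (d : 'I_D) i u : R :=
  1 + (d.+1)%:R / ((D.+1)%:R * Cmean x u (mustar x) i) * (draw x u i - Cmean x u (mustar x) i).
Definition Fminus (d : 'I_D) i u : R :=
  1 - (d.+1)%:R / ((D.+1)%:R * (1 - Cmean x u (mustar x) i)) * (draw x u i - Cmean x u (mustar x) i).

Lemma Fplus_ge0 d i u : (1 <= i <= N)%N -> 0 <= Fplus d i u.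
Proof.
move=> Hi; rewrite /Fplus.
have /andP [C0 C1] := Cmean01 Hx u Hi.
have /andP [X0 X1] := draw_01 Hx u i.
set C := Cmean _ _ _ _ in C0 C1 *; set Xi := draw _ _ _ in X0 X1 *.
have qD : (d.+1)%:R <= (D.+1)%:R :> R by rewrite ler_nat; case: d => /= d; lia.
have q0 : 0 <= (d.+1)%:R :> R by rewrite ler0n.
have Dp : 0 < (D.+1)%:R :> R by rewrite ltr0n.
case: (eqVneq C 0) => [->|Cn0]; first by rewrite mulr0 invr0 mulr0 mul0r addr0 ler01.
have DC0 : (D.+1)%:R * C != 0 by rewrite mulf_neq0 // gt_eqF.
have -> : 1 + (d.+1)%:R / ((D.+1)%:R * C) * (Xi - C) =
  ((D.+1)%:R * C + (d.+1)%:R * (Xi - C)) / ((D.+1)%:R * C) .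
  by field; rewrite Cn0 /= addrC natr1 pnatr_eq0.
apply: divr_ge0; last by apply: mulr_ge0 => //; exact: ltW.
nra.
Qed.

Lemma Fminus_ge0 d i u : (1 <= i <= N)%N -> 0 <= Fminus d i u.
Proof.
move=> Hi; rewrite /Fminus.
have /andP [C0 C1] := Cmean01 Hx u Hi.
have /andP [X0 X1] := draw_01 Hx u i.
set C := Cmean _ _ _ _ in C0 C1 *; set Xi := draw _ _ _ in X0 X1 *.
have qD : (d.+1)%:R <= (D.+1)%:R :> R by rewrite ler_nat; case: d => /= d; lia.
have q0 : 0 <= (d.+1)%:R :> R by rewrite ler0n.
have Dp : 0 < (D.+1)%:R :> R by rewrite ltr0n.
case: (eqVneq (1 - C) 0) => [->|Cn0]; first by rewrite mulr0 invr0 mulr0 mul0r subr0 ler01.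
have DC0 : (D.+1)%:R * (1 - C) != 0 by rewrite mulf_neq0 // gt_eqF.
have -> : 1 - (d.+1)%:R / ((D.+1)%:R * (1 - C)) * (Xi - C) =
  ((D.+1)%:R * (1 - C) - (d.+1)%:R * (Xi - C)) / ((D.+1)%:R * (1 - C)) .
  by field; rewrite Cn0 /= addrC natr1 pnatr_eq0.
apply: divr_ge0; last by apply: mulr_ge0; [exact: ltW | rewrite subr_ge0].
nra.
Qed.

Lemma Fplus_inv t s u d i : same_prefix (draw x) t s u -> (1 <= i <= t)%N ->
  Fplus d i u = Fplus d i s.
Proof.
move=> H Hi; rewrite /Fplus (sp_cmean _ H) ?(sp_draw H) //; lia.
Qed.

Lemma Fminus_inv t s u d i : same_prefix (draw x) t s u -> (1 <= i <= t)%N ->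
  Fminus d i u = Fminus d i s.
Proof.
move=> H Hi; rewrite /Fminus (sp_cmean _ H) ?(sp_draw H) //; lia.
Qed.

Lemma Fplus_ce t s d : (t < N)%N -> cond_exp (draw x) t (Fplus d t.+1) s = 1.
Proof.
move=> tN; set C := Cmean x s (mustar x) t.+1.
set k := (d.+1)%:R / ((D.+1)%:R * C).
rewrite (ce_lin (a := 1 - k * C) (b := k) (Z := fun u => draw x u t.+1)).
  rewrite ce_draw //; rewrite -/C; ring.
move=> u Hu; rewrite /Fplus -(sp_cmean _ Hu) // -/C -/k; ring.
Qed.

Lemma Fminus_ce t s d : (t < N)%N -> cond_exp (draw x) t (Fminus d t.+1) s = 1.
Proof.
move=> tN; set C := Cmean x s (mustar x) t.+1.
set k := (d.+1)%:R / ((D.+1)%:R * (1 - C)).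
rewrite (ce_lin (a := 1 + k * C) (b := - k) (Z := fun u => draw x u t.+1)).
  rewrite ce_draw //; rewrite -/C; ring.
move=> u Hu; rewrite /Fminus -(sp_cmean _ Hu) // -/C -/k; ring.
Qed.

End Fac.

Unset Implicit Arguments.
Theorem proposition2 (R : realFieldType) (N D : nat) (x : 'I_N -> R)
    (thp thm : 'I_D -> R) (beta alpha : R) :
  (forall i, 0 <= x i <= 1) ->
  (2 <= D)%N ->
  (forall d, 0 <= thp d) -> \sum_(d < D) thp d = 1 ->
  (forall d, 0 <= thm d) -> \sum_(d < D) thm d = 1 ->
  0 <= beta <= 1 ->
  0 < alpha < 1 ->
  let mustar := (\sum_(i < N) x i) / N%:R in
  let M := fun t s => Mpm x thp thm beta t mustar s in
  [/\ (forall t s, (t <= N)%N -> 0 <= M t s),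
      (forall s, M 0%N s = 1),
      is_martingale (draw x) M &
      @unif_prob R N [set s : 'S_N | [exists t : 'I_N,
         ~~ ((0 <= mustar <= 1) && (Mpm x thp thm beta t.+1 mustar s < alpha^-1))]]
        <= alpha].
Proof.
move=> Hx HD Hp Hps Hm Hms /andP [b0 b1] /andP [a0 a1] mu M.
have EM : forall t s, M t s = if t == 0%N then 1 else
    beta * Mgen thp (Fplus x) t s + (1 - beta) * Mgen thm (Fminus x) t s by [].
have Mnn : forall t s, (t <= N)%N -> 0 <= M t s.
  move=> t s tN; rewrite EM; case: eqP => // /eqP t0.
  apply: addr_ge0; apply: mulr_ge0; rewrite ?subr_ge0 //;
    apply: Mgen_ge0 => // d i Hi; [apply: Fplus_ge0 | apply: Fminus_ge0] => //; lia.
have Mmart : is_martingale (draw x) M.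
  split.
    move=> t tN s u H; rewrite !EM; case: eqP => // _.
    congr (_ * _ + _ * _); apply: Mgen_inv => d i Hi.
      exact: Fplus_inv (sp_sym H) Hi.
    exact: Fminus_inv (sp_sym H) Hi.
  move=> t tN s.
  have -> : cond_exp (draw x) t (M t.+1) s = cond_exp (draw x) t
     (fun u => beta * Mgen thp (Fplus x) t.+1 u + (1 - beta) * Mgen thm (Fminus x) t.+1 u) s
     by [].
  rewrite ce_add2 !Mgen_ce.
  - rewrite EM; case: eqP => // ->.
    have M0 : forall th (F : 'I_D -> nat -> 'S_N -> R), Mgen th F 0 s = \sum_(d < D) th d.
      by move=> th F; apply: eq_bigr => d _; rewrite big_geq // mulr1.
    rewrite !M0 Hps Hms; ring.
  - by move=> d i u Hi H; apply: Fminus_inv H Hi.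
  - by move=> d; apply: Fminus_ce.
  - by move=> d i u Hi H; apply: Fplus_inv H Hi.
  - by move=> d; apply: Fplus_ce.
split => //.
rewrite /unif_prob (mustar01 Hx) /=.
have ai : 0 < alpha^-1 by rewrite invr_gt0.
have := @ville R N (draw x) M alpha^-1 Mmart Mnn (fun s => erefl) ai.
move=> H.
have T0 : 0 < #|[set: 'S_N]|%:R :> R.
  by rewrite ltr0n; apply/card_gt0P; exists 1%g; rewrite inE.
rewrite ler_pdivrMr // mulrC; move: H; rewrite ler_pdivrMr //.
Qed.
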